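(* Let $(\Gamma,\rho)$ be a voltage graph with $\Gamma$ strongly connected and $G$ a finite group. Then for any two vertices $v_i,v_j$ of $\Gamma$, $\mathrm{Net}(v_i,v_j)=\mathrm{Net}^*(v_i,v_j)$.
   Context: $\Gamma=(V,E)$ is a simple digraph, $e_{ij}$ the edge $v_i\to v_j$; a voltage graph is $(\Gamma,\rho)$ with $\rho:E\to G$, $G$ finite with identity $\mathbf 1$. A semi-walk from $v_{i_1}$ to $v_{i_n}$ is $w=v_{i_1}a_1\dots a_{n-1}v_{i_n}$ where each $a_j$ is either $e_{i_ji_{j+1}}$ or $e_{i_{j+1}i_j}$; it is a walk if every $a_j=e_{i_ji_{j+1}}$ (a single vertex is a trivial walk). Net voltage: $f(w)=\bar\rho(a_1)\cdots\bar\rho(a_{n-1})$, $\bar\rho(a_j)=\rho(a_j)$ if $a_j=e_{i_ji_{j+1}}$, else $\rho(a_j)^{-1}$; $f$ of a trivial semi-walk is $\mathbf 1$. $\mathrm{Net}(v_i,v_j)=\{f(w): w$ semi-walk from $v_i$ to $v_j\}$ and $\mathrm{Net}^*(v_i,v_j)=\{f(w): w$ walk from $v_i$ to $v_j\}$. $\Gamma$ is strongly connected if for every ordered pair of distinct vertices there is a walk (path) from the first to the second. *)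

(* Defs.v *)
From mathcomp Require Import all_boot all_fingroup.
Set Implicit Arguments. Unset Strict Implicit. Unset Printing Implicit Defensive.
Local Open Scope group_scope.

(* A simple digraph on a finite vertex type V: an irreflexive edge relation
   E (E u w means the edge u -> w exists; at most one edge per ordered pair).
   A voltage assignment is rho : V -> V -> gT, read only on edges:
   rho u w is the voltage of the edge e_{uw}. *)
Definition simple_digraph (V : finType) (E : rel V) : Prop := irreflexive E.

(* A semi-walk starting at u is given by its list of steps; a step (w, b)
   goes from the current vertex x to w, along the edge e_{xw} if b = true
   (forward) and along the edge e_{wx} backwards if b = false. *)
Fixpoint semiwalk_ok (V : finType) (E : rel V) (x : V) (s : seq (V * bool)) : bool :=
  match s with
  | [::] => true
  | (w, b) :: s' => (if b then E x w else E w x) && semiwalk_ok E w s'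
  end.

Definition is_walk (V : finType) (s : seq (V * bool)) : bool := all (fun p => p.2) s.

Definition walk_end (V : finType) (x : V) (s : seq (V * bool)) : V := last x (map fst s).

Fixpoint net_voltage (V : finType) (gT : finGroupType) (rho : V -> V -> gT)
    (x : V) (s : seq (V * bool)) : gT :=
  match s with
  | [::] => 1
  | (w, b) :: s' => (if b then rho x w else (rho w x)^-1) * net_voltage rho w s'
  end.

Definition Net (V : finType) (gT : finGroupType) (E : rel V) (rho : V -> V -> gT)
    (u v : V) (g : gT) : Prop :=
  exists s, [/\ semiwalk_ok E u s, walk_end u s = v & net_voltage rho u s = g].

Definition NetStar (V : finType) (gT : finGroupType) (E : rel V) (rho : V -> V -> gT)
    (u v : V) (g : gT) : Prop :=
  exists s, [/\ semiwalk_ok E u s, is_walk s, walk_end u s = v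
               & net_voltage rho u s = g].

Definition strongly_connected (V : finType) (E : rel V) : Prop :=
  forall u v : V, u != v ->
    exists s, [/\ semiwalk_ok E u s, is_walk s & walk_end u s = v].

(* Main.v *)
Require Import Defs.
From mathcomp Require Import all_boot all_fingroup.
Set Implicit Arguments. Unset Strict Implicit. Unset Printing Implicit Defensive.
Local Open Scope group_scope.

Section Aux.
Variables (V : finType) (gT : finGroupType) (E : rel V) (rho : V -> V -> gT).

Lemma swok_cat (x : V) (s1 s2 : seq (V * bool)) : semiwalk_ok E x (s1 ++ s2) =
  semiwalk_ok E x s1 && semiwalk_ok E (walk_end x s1) s2.
Proof.
elim: s1 x => [|[w b] s1 IH] x //=.
by rewrite IH andbA.
Qed.

Lemma wend_cat (x : V) (s1 s2 : seq (V * bool)) : walk_end x (s1 ++ s2) = walk_end (walk_end x s1) s2.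
Proof. by rewrite /walk_end map_cat last_cat. Qed.

Lemma net_cat (x : V) (s1 s2 : seq (V * bool)) : net_voltage rho x (s1 ++ s2) =
  net_voltage rho x s1 * net_voltage rho (walk_end x s1) s2.
Proof.
elim: s1 x => [|[w b] s1 IH] x /=; first by rewrite mul1g.
by rewrite IH mulgA.
Qed.

Lemma iswalk_cat (s1 s2 : seq (V * bool)) : is_walk (s1 ++ s2) = is_walk s1 && is_walk s2.
Proof. by rewrite /is_walk all_cat. Qed.

Lemma rep_closed (w : V) (C : seq (V * bool)) : semiwalk_ok E w C -> is_walk C -> walk_end w C = w ->
  forall k, [/\ semiwalk_ok E w (flatten (nseq k C)), is_walk (flatten (nseq k C)),
     walk_end w (flatten (nseq k C)) = w &
     net_voltage rho w (flatten (nseq k C)) = (net_voltage rho w C) ^+ k].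
Proof.
move=> h1 h2 h3; elim=> [|k [k1 k2 k3 k4]] /=; first by rewrite expg0.
rewrite swok_cat iswalk_cat wend_cat net_cat h3 h1 h2 k1 k2 k3 k4 expgS.
by [].
Qed.

Lemma step_walk (x w : V) (b : bool) : simple_digraph E -> strongly_connected E ->
  (if b then E x w else E w x) ->
  exists t, [/\ semiwalk_ok E x t, is_walk t, walk_end x t = w &
    net_voltage rho x t = (if b then rho x w else (rho w x)^-1)].
Proof.
move=> Hs Hc; case: b => HE.
  by exists [:: (w, true)]; rewrite /= HE mulg1.
have xw : x != w.
  by apply/eqP=> exw; move: HE; rewrite exw (Hs w).
have [P [P1 P2 P3]] := Hc x w xw.
set C := (x, true) :: P.
have C1 : semiwalk_ok E w C by rewrite /= HE P1.
have C2 : is_walk C by move: P2; rewrite /is_walk /=.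
have C3 : walk_end w C = w by rewrite /walk_end /=; exact: P3.
set c := net_voltage rho w C.
have [R1 R2 R3 R4] := rep_closed C1 C2 C3 (#[c].-1).
exists (P ++ flatten (nseq #[c].-1 C)).
split.
- by rewrite swok_cat P1 P3 R1.
- by rewrite iswalk_cat P2 R2.
- by rewrite wend_cat P3 R3.
rewrite net_cat P3 R4.
have Hc1 : c ^+ #[c].-1 * c = 1 by rewrite -expgSr prednK ?order_gt0 // expg_order.
have -> : c ^+ #[c].-1 = c^-1 by rewrite -[c^-1]mul1g -Hc1 mulgK.
rewrite /c /C /= invMg mulgA mulgV mul1g.
done.
Qed.

Lemma main_walk (s : seq (V * bool)) : simple_digraph E -> strongly_connected E -> forall x,
  semiwalk_ok E x s -> exists t, [/\ semiwalk_ok E x t, is_walk t,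
    walk_end x t = walk_end x s & net_voltage rho x t = net_voltage rho x s].
Proof.
move=> Hs Hc; elim: s => [|[w b] s IH] x /=.
  by move=> _; exists [::].
case/andP=> Hst Hok.
have [t1 [A1 A2 A3 A4]] := step_walk Hs Hc Hst.
have [t2 [B1 B2 B3 B4]] := IH w Hok.
exists (t1 ++ t2).
rewrite swok_cat iswalk_cat wend_cat net_cat A3 A1 A2 B1 B2 B3 B4 A4.
by split.
Qed.
End Aux.

Theorem theorem1 (V : finType) (gT : finGroupType) (E : rel V)
    (rho : V -> V -> gT) :
  simple_digraph E -> strongly_connected E ->
  forall (vi vj : V) (g : gT), Net E rho vi vj g <-> NetStar E rho vi vj g.
Proof.
move=> Hs Hc vi vj g; split.
  move=> [s [H1 H2 H3]].
  have [t [T1 T2 T3 T4]] := main_walk rho Hs Hc H1.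
  by exists t; split=> //; rewrite ?T3 ?T4.
by move=> [s [H1 _ H2 H3]]; exists s.
Qed.
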